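(* (Endmarker lemma.) For any language $L$ in $\mathrm{1QFA}/n$ over an alphabet $\Sigma$, there exist a 1qfa $M$, a constant $\varepsilon\in[0,1/2)$, an advice alphabet $\Gamma$, and an advice function $h:\mathbb{N}\to\Gamma^*$ such that (i) $M$'s input tape has no endmarkers, (ii) $|h(n)|=n$ holds for every length $n\in\mathbb{N}$, and (iii) $\Pr_M\big[M(\genfrac{[}{]}{0pt}{}{x}{h(|x|)}) = L(x)\big]\geq 1-\varepsilon$ holds for every input string $x\in\Sigma^*$.
   Context: A 1qfa is a one-way measure-many quantum finite automaton $M=(Q,\Sigma,\{U_\sigma\}_{\sigma\in\Sigma\cup\{\cent,\$\}},q_0,Q_{acc},Q_{rej})$: the input $x$ is normally written as $\cent x\$$ between a left endmarker $\cent$ and a right endmarker $\$$, the head moves right one cell per step, at each step the unitary $U_\sigma$ for the scanned symbol $\sigma$ is applied to the current state and then a projection measurement onto the accepting, rejecting and non-halting subspaces is made; acceptance/rejection probabilities are accumulated over the steps. For two strings $x=x_1\cdots x_n\in\Sigma^n$, $y=y_1\cdots y_n\in\Gamma^n$ of equal length, $\genfrac{[}{]}{0pt}{}{x}{y}$ denotes the two-track string whose $i$th cell holds the pair symbol $\genfrac{[}{]}{0pt}{}{x_i}{y_i}$ (upper track $x_i$, lower track $y_i$), read simultaneously by the head. $L(x)$ denotes the characteristic function of $L$ ($1$ if $x\in L$, $0$ otherwise), and $M(\cdot)\in\{0,1\}$ is the (random) output (accept $=1$, reject $=0$). $\mathrm{1QFA}/n$ is the family of languages $L$ over $\Sigma$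 for which there exist a 1qfa $M$ (with both endmarkers), an error bound $\varepsilon\in[0,1/2)$, an advice alphabet $\Gamma$ and an advice function $h:\mathbb{N}\to\Gamma^*$ (not necessarily computable) with $|h(n)|=n$ such that $\Pr_M[M(\genfrac{[}{]}{0pt}{}{x}{h(|x|)})=L(x)]\geq1-\varepsilon$ for all $x\in\Sigma^*$. *)

(* Defs.v *)
From HB Require Import structures.
From mathcomp Require Import all_boot all_order all_algebra.
From mathcomp Require Import complex reals.
Set Implicit Arguments. Unset Strict Implicit. Unset Printing Implicit Defensive.
Import Order.TTheory GRing.Theory Num.Theory.
Local Open Scope ring_scope.

Inductive emk (A : Type) : Type := Cent | Dollar | Sym of A.
Arguments Cent {A}. Arguments Dollar {A}.

(* A 1qfa (measure-many) over tape alphabet A with amplitudes in R[i].  States are row vectors, one step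
   with symbol a maps psi to psi *m U a. *)
Record qfa (R : realType) (A : Type) := Qfa {
  qfa_n : nat;
  qfa_U : A -> 'M[R[i]]_qfa_n;
  qfa_q0 : 'I_qfa_n;
  qfa_acc : {set 'I_qfa_n};
  qfa_rej : {set 'I_qfa_n};
  qfa_unitary : forall a, qfa_U a *m (map_mx (@conjc R) (qfa_U a))^T = 1%:M;
  qfa_disj : [disjoint qfa_acc & qfa_rej]
}.

Section Semantics.
Variables (R : realType) (A : Type) (M : qfa R A).
Local Notation n := (qfa_n M).

Definition qfa_non : {set 'I_n} := ~: (qfa_acc M :|: qfa_rej M).

Definition projS (S : {set 'I_n}) (psi : 'rV[R[i]]_n) : 'rV[R[i]]_n :=
  \row_j (if j \in S then psi 0 j else 0).

Definition sqnorm (psi : 'rV[R[i]]_n) : R :=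
  \sum_j ((complex.Re (psi 0 j)) ^+ 2 + (complex.Im (psi 0 j)) ^+ 2).

Definition init_state : 'rV[R[i]]_n := \row_j (j == qfa_q0 M)%:R.

(* (total acceptance probability, total rejection probability) accumulated
   while reading w from (unnormalized) state psi.  When the tape is exhausted the remaining state is
   measured once more (this only matters for the empty tape). *)
Fixpoint run (psi : 'rV[R[i]]_n) (w : seq A) : R * R :=
  match w with
  | [::] => (sqnorm (projS (qfa_acc M) psi), sqnorm (projS (qfa_rej M) psi))
  | a :: w' =>
      let phi := psi *m qfa_U M a in
      let r := run (projS qfa_non phi) w' in
      (sqnorm (projS (qfa_acc M) phi) + r.1, sqnorm (projS (qfa_rej M) phi) + r.2)
  end.

Definition prob_out (w : seq A) (b : bool) : R :=
  if b then (run init_state w).1 else (run init_state w).2.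

End Semantics.

Definition with_endmarkers (A : Type) (w : seq A) : seq (emk A) :=
  Cent :: map (@Sym A) w ++ [:: Dollar].

Definition track (S G : Type) (x : seq S) (y : seq G) : seq (S * G) := zip x y.

Definition in_1QFAn (R : realType) (Sigma : finType) (L : seq Sigma -> bool) : Prop :=
  exists (Gamma : finType) (M : qfa R (emk (Sigma * Gamma))) (eps : R)
         (h : nat -> seq Gamma),
    [/\ 0 <= eps < 1 / 2,
        forall n, size (h n) = n &
        forall x : seq Sigma,
          prob_out M (with_endmarkers (track x (h (size x)))) (L x) >= 1 - eps].

(* Main.v *)
Require Import Defs.
From HB Require Import structures.
From mathcomp Require Import all_boot all_order all_algebra.
From mathcomp Require Import complex reals.
Set Implicit Arguments. Unset Strict Implicit. Unset Printing Implicit Defensive.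
Import Order.TTheory GRing.Theory Num.Theory.
Local Open Scope ring_scope.

Section Gen.
Variable R : realType.
Local Notation C := R[i].

Definition gproj m (S : {set 'I_m}) (v : 'rV[C]_m) : 'rV[C]_m :=
  \row_j (if j \in S then v 0 j else 0).
Definition sqc (z : C) : R := complex.Re z ^+ 2 + complex.Im z ^+ 2.
Definition gsq m (v : 'rV[C]_m) : R := \sum_j sqc (v 0 j).
Definition unitary m (A : 'M[C]_m) := A *m (map_mx (@conjc R) A)^T = 1%:M.

Lemma projSE A (M : qfa R A) S v : @projS R A M S v = gproj S v.
Proof. by []. Qed.
Lemma sqnormE A (M : qfa R A) v : @sqnorm R A M v = gsq v.
Proof. by []. Qed.

Lemma sqc0 : sqc 0 = 0.
Proof. by rewrite /sqc /= expr0n /= addr0. Qed.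

Lemma gsq0 m : gsq (0 : 'rV[C]_m) = 0.
Proof. by rewrite /gsq big1 // => j _; rewrite mxE sqc0. Qed.

Lemma gsq_proj m S (v : 'rV[C]_m) :
  gsq (gproj S v) = \sum_(j in S) sqc (v 0 j).
Proof.
rewrite /gsq [RHS]big_mkcond /=; apply: eq_bigr => j _; rewrite mxE.
by case: ifP => // _; rewrite sqc0.
Qed.

Lemma gprojD m S (u v : 'rV[C]_m) : gproj S (u + v) = gproj S u + gproj S v.
Proof. by apply/rowP => j; rewrite !mxE; case: ifP; rewrite ?addr0. Qed.

Lemma gproj0 m S : gproj S (0 : 'rV[C]_m) = 0.
Proof. by apply/rowP => j; rewrite !mxE; case: ifP. Qed.

Lemma gprojI m (S T : {set 'I_m}) (v : 'rV[C]_m) : gproj S (gproj T v) = gproj (S :&: T) v.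
Proof. by apply/rowP => j; rewrite !mxE inE; case: (j \in S); case: (j \in T). Qed.

Lemma gproj_set0 m (v : 'rV[C]_m) : gproj set0 v = 0.
Proof. by apply/rowP => j; rewrite !mxE inE. Qed.

Lemma gprojC m S (v : 'rV[C]_m) : gproj (~: S) v + gproj S v = v.
Proof.
by apply/rowP => j; rewrite !mxE inE; case: (j \in S); rewrite ?add0r ?addr0.
Qed.

Lemma gproj_id m (S T : {set 'I_m}) (v : 'rV[C]_m) : T \subset S -> gproj S (gproj T v) = gproj T v.
Proof. by move=> sTS; rewrite gprojI; congr gproj; apply/setIidPr. Qed.

Lemma gproj_dis m (S T : {set 'I_m}) (v : 'rV[C]_m) : S :&: T = set0 -> gproj S (gproj T v) = 0.
Proof. by move=> dis; rewrite gprojI dis gproj_set0. Qed.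

Lemma unitary_mul m (A B : 'M[C]_m) : unitary A -> unitary B -> unitary (A *m B).
Proof.
rewrite /unitary => hA hB.
by rewrite map_mxM trmx_mul mulmxA -(mulmxA A) hB mulmx1 hA.
Qed.

Lemma unitary1 m : unitary (1%:M : 'M[C]_m).
Proof. by rewrite /unitary map_mx1 trmx1 mulmx1. Qed.

End Gen.
Section Copies.
Variable R : realType.
Local Notation C := R[i].
Variable n : nat.
Local Notation T := ('I_5 * 'I_n)%type.
Local Notation N := #|{: T}|.

Definition vecf (f : T -> C) : 'rV[C]_N := \row_j f (enum_val j).
Definition mat (F : T -> T -> C) : 'M[C]_N :=
  \matrix_(i, j) F (enum_val i) (enum_val j).

Lemma sumT (V : nmodType) (G : T -> V) : \sum_(j < N) G (enum_val j) = \sum_t G t.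
Proof.
by rewrite -(big_enum_val (A := predT)); apply: eq_bigl => x; rewrite inE.
Qed.

Lemma sumTP (V : nmodType) (G : T -> V) : \sum_(t : T) G t = \sum_c \sum_q G (c, q).
Proof. by rewrite pair_bigA; apply: eq_bigr => -[c q]. Qed.

Lemma vecf_ext f g : f =1 g -> vecf f = vecf g.
Proof. by move=> e; apply/rowP => j; rewrite !mxE e. Qed.

Lemma mat_ext F G : (forall s t, F s t = G s t) -> mat F = mat G.
Proof. by move=> e; apply/matrixP => i j; rewrite !mxE e. Qed.

Lemma vecf_mul f F : vecf f *m mat F = vecf (fun t => \sum_s f s * F s t).
Proof.
apply/rowP => j; rewrite !mxE; under eq_bigr do rewrite !mxE.
by rewrite (sumT (fun s => f s * F s (enum_val j))).
Qed.

Lemma mat_mul F G : mat F *m mat G = mat (fun s t => \sum_u F s u * G u t).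
Proof.
apply/matrixP => i j; rewrite !mxE; under eq_bigr do rewrite !mxE.
by rewrite (sumT (fun u => F (enum_val i) u * G u (enum_val j))).
Qed.

Lemma mat_trc F : (map_mx (@conjc R) (mat F))^T = mat (fun s t => conjc (F t s)).
Proof. by apply/matrixP => i j; rewrite !mxE. Qed.

Lemma mat1 : (1%:M : 'M[C]_N) = mat (fun s t => (s == t)%:R).
Proof. by apply/matrixP => i j; rewrite !mxE (inj_eq enum_val_inj). Qed.

Lemma unitary_mat F :
  (forall s t, \sum_u F s u * conjc (F t u) = (s == t)%:R) -> unitary (mat F).
Proof.
by move=> h; rewrite /unitary mat_trc mat_mul mat1; apply: mat_ext.
Qed.

Definition PM (tau : T -> T) := mat (fun s t => (s == tau t)%:R).

Lemma vecf_PM f tau : vecf f *m PM tau = vecf (f \o tau).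
Proof.
rewrite vecf_mul; apply: vecf_ext => t /=.
rewrite (bigD1 (tau t)) //= eqxx mulr1 big1 ?addr0 // => s /negbTE ->.
by rewrite mulr0.
Qed.

Lemma unitary_PM tau : injective tau -> unitary (PM tau).
Proof.
move=> itau; apply: unitary_mat => s t.
transitivity (\sum_u (s == u)%:R * conjc ((t == u)%:R : C)).
  by rewrite [RHS](reindex_inj itau).
rewrite (bigD1 s) //= eqxx mul1r conjc_nat big1 ?addr0; first by rewrite eq_sym.
by move=> u /negbTE; rewrite eq_sym => ->; rewrite mul0r.
Qed.

Definition BD (W : 'I_5 -> 'M[C]_n) :=
  mat (fun s t => (s.1 == t.1)%:R * W s.1 s.2 t.2).

Lemma unitary_BD W : (forall c, unitary (W c)) -> unitary (BD W).
Proof.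
move=> hW; apply: unitary_mat => -[c q] [d r] /=.
rewrite sumTP (bigD1 c) //= [X in _ + X]big1 ?addr0; last first.
  move=> e /negbTE ne; apply: big1 => p _; rewrite eq_sym ne mul0r mul0r //.
under eq_bigr do rewrite eqxx mul1r rmorphM rmorph_nat.
have [<-|ne] := eqVneq c d; last first.
  by rewrite big1 ?xpair_eqE ?(negbTE ne) // => p _; rewrite mul0r mulr0.
rewrite xpair_eqE eqxx /=.
have e := hW c; rewrite /unitary in e.
have := congr1 (fun A : 'M[C]_n => A q r) e; rewrite !mxE => <-.
by apply: eq_bigr => p _; rewrite !mxE mul1r.
Qed.

Definition vec5 (g : 'I_5 -> 'rV[C]_n) := vecf (fun t => g t.1 0 t.2).

Lemma vec5_BD g W : vec5 g *m BD W = vec5 (fun c => g c *m W c).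
Proof.
rewrite vecf_mul; apply: vecf_ext => -[c q] /=.
rewrite sumTP (bigD1 c) //= [X in _ + X]big1 ?addr0; last first.
  move=> e /negbTE ne; apply: big1 => p _ /=; rewrite ne mul0r mulr0 //.
rewrite mxE; apply: eq_bigr => p _; rewrite eqxx mul1r //.
Qed.

Lemma vec5_PM g tau : vec5 g *m PM tau = vecf (fun t => g (tau t).1 0 (tau t).2).
Proof. by rewrite vecf_PM. Qed.

Lemma vec5_ext g h : (forall c, g c = h c) -> vec5 g = vec5 h.
Proof. by move=> e; apply: vecf_ext => t; rewrite e. Qed.


End Copies.

Definition o0 : 'I_5 := @Ordinal 5 0 isT.
Definition o1 : 'I_5 := @Ordinal 5 1 isT.
Definition o2 : 'I_5 := @Ordinal 5 2 isT.
Definition o3 : 'I_5 := @Ordinal 5 3 isT.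
Definition o4 : 'I_5 := @Ordinal 5 4 isT.

Definition prev5 (c : 'I_5) : 'I_5 :=
  match val c with 0 => o0 | 1 => o4 | 2 => o1 | 3 => o2 | _ => o3 end.
Definition sw5 (c : 'I_5) : 'I_5 :=
  match val c with 0 => o1 | 1 => o0 | _ => c end.

Lemma prev5_inj : injective prev5.
Proof.
move=> c d e; apply: val_inj; move: c d e.
by move=> [[|[|[|[|[|k]]]]] hk] [[|[|[|[|[|l]]]]] hl] //= /(congr1 val).
Qed.

Lemma sw5_inj : injective sw5.
Proof.
move=> c d e; apply: val_inj; move: c d e.
by move=> [[|[|[|[|[|k]]]]] hk] [[|[|[|[|[|l]]]]] hl] //= /(congr1 val).
Qed.

Section Sim.
Variable R : realType.
Local Notation C := R[i].
Variable B : Type.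
Variable M : qfa R B.
Local Notation n := (qfa_n M).
Local Notation T := ('I_5 * 'I_n)%type.
Local Notation N := #|{: T}|.
Local Notation U := (qfa_U M).
Local Notation acc := (qfa_acc M).
Local Notation rej := (qfa_rej M).
Local Notation halt := (qfa_acc M :|: qfa_rej M).
Local Notation non := (qfa_non M).

Record St := mkSt { s0 : 'rV[C]_n; s1 : 'rV[C]_n; s2 : 'rV[C]_n;
                    s3 : 'rV[C]_n; s4 : 'rV[C]_n }.

Definition fam (x : St) (c : 'I_5) : 'rV[C]_n :=
  match val c with 0 => s0 x | 1 => s1 x | 2 => s2 x | 3 => s3 x | _ => s4 x end.

Definition tauh (t : T) : T := if t.2 \in halt then (prev5 t.1, t.2) else t.
Definition tsw (t : T) : T := (sw5 t.1, t.2).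

Lemma tauh_inj : injective tauh.
Proof.
move=> [c q] [d r]; rewrite /tauh /=.
case: ifP => hq; case: ifP => hr -[e1 e2].
- by rewrite e2 (prev5_inj e1).
- by rewrite e2 hr in hq.
- by rewrite e2 hr in hq.
- by rewrite e1 e2.
Qed.

Lemma tsw_inj : injective tsw.
Proof. by move=> [c q] [d r] [/sw5_inj -> ->]. Qed.

Definition Wm (a : B) (c : 'I_5) : 'M[C]_n := if val c == 1%N then U a else 1%:M.
Definition G (a : B) : 'M[C]_N := BD (Wm a) *m PM R tauh.
Definition Vl (u : seq B) : 'M[C]_N := foldr (fun a m => G a *m m) 1%:M u.

Lemma unitary_G a : unitary (G a).
Proof.
apply: unitary_mul; last by apply: unitary_PM; exact: tauh_inj.
apply: unitary_BD => c; rewrite /Wm; case: ifP => _; last exact: unitary1.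
exact: qfa_unitary.
Qed.

Lemma unitary_Vl u : unitary (Vl u).
Proof.
elim: u => [|a u IH] /=; first exact: unitary1.
by apply: unitary_mul => //; apply: unitary_G.
Qed.

Definition step5 (a : B) (x : St) : St :=
  mkSt (s0 x) (gproj non (s1 x *m U a) + gproj halt (s4 x))
       (gproj non (s2 x) + gproj halt (s1 x *m U a))
       (gproj non (s3 x) + gproj halt (s2 x))
       (gproj non (s4 x) + gproj halt (s3 x)).

Lemma vec5_G a x : vec5 (fam x) *m G a = vec5 (fam (step5 a x)).
Proof.
rewrite mulmxA vec5_BD vec5_PM; apply: vecf_ext => -[c q].
rewrite /tauh /=; case: (boolP (q \in halt)) => hq; move: (hq); rewrite inE => hq';
  case: c => [[|[|[|[|[|k]]]]] hk] //=; rewrite /Wm /fam /prev5 /= ?mulmx1 ?mxE ?inE ?hq' ?(negbTE hq') /=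
  ?add0r ?addr0 //.

Qed.

Lemma vec5_sw x :
  vec5 (fam x) *m PM R tsw = vec5 (fam (mkSt (s1 x) (s0 x) (s2 x) (s3 x) (s4 x))).
Proof.
rewrite vec5_PM; apply: vecf_ext => -[c q].
by case: c => [[|[|[|[|[|k]]]]] hk].
Qed.

Definition iter5 (u : seq B) (x : St) : St := foldl (fun x a => step5 a x) x u.

Lemma vec5_Vl u x : vec5 (fam x) *m Vl u = vec5 (fam (iter5 u x)).
Proof.
elim: u x => [|a u IH] x /=; first by rewrite mulmx1.
by rewrite mulmxA vec5_G IH.
Qed.

Definition setF (Sf : 'I_5 -> {set 'I_n}) : {set 'I_N} :=
  [set j | (enum_val j).2 \in Sf (enum_val j).1].

Lemma gproj_setF Sf (g : 'I_5 -> 'rV[C]_n) :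
  gproj (setF Sf) (vec5 g) = vec5 (fun c => gproj (Sf c) (g c)).
Proof. by apply/rowP => j; rewrite !mxE inE. Qed.

Lemma gsq_vec5 (g : 'I_5 -> 'rV[C]_n) : gsq (vec5 g) = \sum_c gsq (g c).
Proof.
rewrite /gsq; under eq_bigr do rewrite mxE.
rewrite (sumT (fun t => sqc (g t.1 0 t.2))) sumTP.
by apply: eq_bigr => c _.
Qed.

Lemma sum5 (F : 'rV[C]_n -> R) x :
  \sum_c F (fam x c) = F (s0 x) + (F (s1 x) + (F (s2 x) + (F (s3 x) + F (s4 x)))).
Proof. by rewrite !big_ord_recl big_ord0 addr0. Qed.

Fixpoint racc (psi : 'rV[C]_n) (u : seq B) : R :=
  if u is a :: u' then gsq (gproj acc (psi *m U a)) + racc (gproj non (psi *m U a)) u'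
  else 0.
Fixpoint rrej (psi : 'rV[C]_n) (u : seq B) : R :=
  if u is a :: u' then gsq (gproj rej (psi *m U a)) + rrej (gproj non (psi *m U a)) u'
  else 0.
Fixpoint after (psi : 'rV[C]_n) (u : seq B) : 'rV[C]_n :=
  if u is a :: u' then after (gproj non (psi *m U a)) u' else psi.

Lemma run_cat psi u w :
  run psi (u ++ w) = (racc psi u + (run (after psi u) w).1,
                      rrej psi u + (run (after psi u) w).2).
Proof.
elim: u psi => [|a u IH] psi /=; first by rewrite !add0r; case: run.
by rewrite IH /= !addrA.
Qed.

Lemma after_proj psi u : (0 < size u)%N -> gproj non (after psi u) = after psi u.
Proof.
elim: u psi => [|a u IH] psi //= _.
case: u IH => [|b u] IH /=; first by rewrite gproj_id.
exact: IH.
Qed.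

Lemma Pnh (v : 'rV[C]_n) : gproj non (gproj halt v) = 0.
Proof.
apply/rowP => j; rewrite !mxE /qfa_non !inE.
by case: (_ || _).
Qed.

Lemma PSh (S : {set 'I_n}) (v : 'rV[C]_n) : S \subset halt -> gproj S (gproj halt v) = gproj S v.
Proof.
move=> /subsetP sub; apply/rowP => j; rewrite !mxE.
by case: ifP => // /sub ->.
Qed.

Lemma PSn (S : {set 'I_n}) (v : 'rV[C]_n) : S \subset halt -> gproj S (gproj non v) = 0.
Proof.
move=> /subsetP sub; apply/rowP => j; rewrite !mxE /qfa_non.
by case: ifP => // /sub hj; rewrite inE hj.
Qed.

Lemma acc_sub : acc \subset halt. Proof. exact: subsetUl. Qed.
Lemma rej_sub : rej \subset halt. Proof. exact: subsetUr. Qed.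

Definition Jinv (x : St) :=
  [/\ s0 x = 0, gproj non (s2 x) = 0, gproj non (s3 x) = 0 & gproj non (s4 x) = 0].
Definition room (k : nat) (x : St) :=
  [/\ (3 <= k)%N -> s2 x = 0, (2 <= k)%N -> s3 x = 0 & (1 <= k)%N -> s4 x = 0].
Definition nu (S : {set 'I_n}) (x : St) :=
  gsq (gproj S (s2 x)) + gsq (gproj S (s3 x)) + gsq (gproj S (s4 x)).

Lemma nu_step (S : {set 'I_n}) a x : S \subset halt -> Jinv x -> s4 x = 0 ->
  nu S (step5 a x) = gsq (gproj S (s1 x *m U a)) + nu S x.
Proof.
move=> sub [_ h2 h3 h4] h4'.
by rewrite /nu /= h2 h3 h4 h4' !add0r !PSh // gproj0 gsq0 addr0 !addrA.
Qed.

Lemma iter_ok u x : (size u <= 3)%N -> Jinv x -> room (size u) x ->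
  [/\ Jinv (iter5 u x), s1 (iter5 u x) = after (s1 x) u,
      nu acc (iter5 u x) = racc (s1 x) u + nu acc x &
      nu rej (iter5 u x) = rrej (s1 x) u + nu rej x].
Proof.
elim: u x => [|a u IH] x /=; first by move=> _ hJ _; rewrite !add0r.
move=> hs hJ [r2 r3 r4].
have h4 : s4 x = 0 by apply: r4.
case: (hJ) => h0 h2 h3 h4n.
have hJ' : Jinv (step5 a x).
  by split; rewrite /= ?h0 // ?h2 ?h3 ?h4n ?add0r Pnh.
have hroom : room (size u) (step5 a x).
  split => hk; first by rewrite ltnNge hk in hs.
  - by rewrite /= h3 add0r r2 ?gproj0 //.
  - by rewrite /= h4n add0r r3 ?gproj0 //.
have [hJ'' e1 ea er] := IH (step5 a x) (ltnW hs) hJ' hroom.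
have es1 : s1 (step5 a x) = gproj non (s1 x *m U a) by rewrite /= h4 gproj0 addr0.
split => //; first by rewrite e1 es1.
  by rewrite ea es1 (nu_step _ acc_sub hJ h4) addrCA addrA.
by rewrite er es1 (nu_step _ rej_sub hJ h4) addrCA addrA.
Qed.

Lemma fam_proj (Sf : 'I_5 -> {set 'I_n}) x :
  vec5 (fun c => gproj (Sf c) (fam x c)) =
  vec5 (fam (mkSt (gproj (Sf o0) (s0 x)) (gproj (Sf o1) (s1 x)) (gproj (Sf o2) (s2 x))
                  (gproj (Sf o3) (s3 x)) (gproj (Sf o4) (s4 x)))).
Proof.
apply: vec5_ext => -[[|[|[|[|[|k]]]]] hk] //=; congr gproj; congr Sf; exact: val_inj.
Qed.

Lemma gsq_fam x : gsq (vec5 (fam x)) =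
  gsq (s0 x) + (gsq (s1 x) + (gsq (s2 x) + (gsq (s3 x) + gsq (s4 x)))).
Proof. by rewrite gsq_vec5 (sum5 (@gsq R n)). Qed.

Variables (A' : Type) (blk : A' -> seq B) (isfirst : A' -> bool) (L0 : bool).

Definition Vb (b : A') : 'M[C]_N :=
  (if isfirst b then PM R tsw else 1%:M) *m Vl (blk b).

Lemma unitary_Vb b : Vb b *m (map_mx (@conjc R) (Vb b))^T = 1%:M.
Proof.
apply: unitary_mul; last exact: unitary_Vl.
case: isfirst; last exact: unitary1.
by apply: unitary_PM; exact: tsw_inj.
Qed.

Definition accS (c : 'I_5) : {set 'I_n} :=
  if val c == 0%N then (if L0 then [set qfa_q0 M] else set0) else acc.
Definition rejS (c : 'I_5) : {set 'I_n} :=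
  if val c == 0%N then (if L0 then set0 else [set qfa_q0 M]) else rej.

Lemma disj' : [disjoint setF accS & setF rejS].
Proof.
rewrite -setI_eq0; apply/eqP/setP => j; rewrite !inE.
case: (enum_val j) => c q /=; rewrite /accS /rejS; case: ifP => _.
  by case: L0; rewrite ?inE ?andbF.
have := qfa_disj M; rewrite -setI_eq0 => /eqP/setP/(_ q); rewrite !inE => ->.
by [].
Qed.

Definition Mq : qfa R A' :=
  @Qfa R A' N Vb (enum_rank (o0, qfa_q0 M)) (setF accS) (setF rejS) unitary_Vb disj'.

Definition E1 (psi : 'rV[C]_n) := mkSt 0 psi 0 0 0.
Definition E0 (psi : 'rV[C]_n) := mkSt psi 0 0 0 0.

Lemma Vb_act b psi :
  vec5 (fam (if isfirst b then E0 psi else E1 psi)) *m Vb b =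
  vec5 (fam (iter5 (blk b) (E1 psi))).
Proof.
rewrite /Vb mulmxA; case: isfirst; last by rewrite mulmx1 vec5_Vl.
by rewrite vec5_sw vec5_Vl.
Qed.

Lemma non_Mq : qfa_non Mq = setF (fun c => ~: (accS c :|: rejS c)).
Proof. by apply/setP => j; rewrite !inE. Qed.

Lemma run_step b psi w : (0 < size (blk b) <= 3)%N ->
  @run R A' Mq (vec5 (fam (if isfirst b then E0 psi else E1 psi))) (b :: w)
  = (racc psi (blk b) + (@run R A' Mq (vec5 (fam (E1 (after psi (blk b))))) w).1,
     rrej psi (blk b) + (@run R A' Mq (vec5 (fam (E1 (after psi (blk b))))) w).2).
Proof.
move=> /andP[hs0 hs3].
have [hJ e1 ea er] := @iter_ok (blk b) (E1 psi) hs3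
  (And4 erefl (gproj0 _ _) (gproj0 _ _) (gproj0 _ _)) (And3 (fun _ => erefl) (fun _ => erefl) (fun _ => erefl)).
case: hJ => h0 h2 h3 h4.
set y := iter5 (blk b) (E1 psi) in h0 h2 h3 h4 e1 ea er *.
rewrite [LHS]/= Vb_act -/y.
rewrite !projSE non_Mq !gproj_setF !fam_proj /accS /rejS /= -/(qfa_non M).
rewrite h0 !gproj0 h2 h3 h4 e1 /= after_proj //.
have ha : gproj acc (after psi (blk b)) = 0 by rewrite -(after_proj _ hs0) PSn // acc_sub.
have hr : gproj rej (after psi (blk b)) = 0 by rewrite -(after_proj _ hs0) PSn // rej_sub.
rewrite /nu /= !gproj0 !gsq0 !addr0 in ea er.
rewrite !sqnormE !gsq_fam ha hr !gsq0 !add0r -ea -er /nu /= !addrA.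
by [].
Qed.


Hypothesis hblk : forall b, (0 < size (blk b) <= 3)%N.

Lemma runA w psi : all (fun b => ~~ isfirst b) w ->
  @run R A' Mq (vec5 (fam (E1 psi))) w = run psi (flatten (map blk w)).
Proof.
elim: w psi => [|b w IH] psi.
  move=> _ /=; rewrite !projSE !gproj_setF !fam_proj /accS /rejS /= !gproj0.
  by rewrite !sqnormE !gsq_fam !gsq0 !add0r !addr0.
move=> /andP[nf hw]; have := run_step psi w (hblk b); rewrite (negbTE nf) => ->.
by rewrite IH // run_cat.
Qed.

Lemma runB b w psi : isfirst b -> all (fun b => ~~ isfirst b) w ->
  @run R A' Mq (vec5 (fam (E0 psi))) (b :: w) = run psi (flatten (map blk (b :: w))).
Proof.
move=> f hw; have := run_step psi w (hblk b); rewrite f => ->.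
by rewrite runA // run_cat.
Qed.

Lemma init_Mq : @init_state R A' Mq = vec5 (fam (E0 (init_state M))).
Proof.
apply/rowP => j; rewrite !mxE /=.
rewrite -(inj_eq enum_val_inj) enum_rankK.
case: (enum_val j) => -[[|[|[|[|[|k]]]]] hk] q //=; rewrite /E0 /= ?mxE //.
Qed.

Lemma empty_ok : @prob_out R A' Mq [::] L0 = 1.
Proof.
rewrite /prob_out init_Mq /= !projSE !gproj_setF !fam_proj /accS /rejS /= !gproj0.
rewrite !sqnormE !gsq_fam !gsq0 !addr0.
case: L0; rewrite /= gsq_proj big_set1 mxE eqxx /sqc /=.
all: by rewrite expr1n expr0n /= addr0.
Qed.
End Sim.

Section Main.
Variables (Sigma Gamma : Type).
Local Notation A' := (Sigma * (Gamma * 'I_4))%type.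
Local Notation B := (emk (Sigma * Gamma)).

Definition t0 : 'I_4 := @Ordinal 4 0 isT.
Definition t1 : 'I_4 := @Ordinal 4 1 isT.
Definition t2 : 'I_4 := @Ordinal 4 2 isT.
Definition t3 : 'I_4 := @Ordinal 4 3 isT.

Definition blk (b : A') : seq B :=
  let: (s, (g, t)) := b in
  match val t with
  | 0 => [:: Cent; Sym (s, g); Dollar]
  | 1 => [:: Cent; Sym (s, g)]
  | 2 => [:: Sym (s, g)]
  | _ => [:: Sym (s, g); Dollar]
  end.
Definition isfirst (b : A') : bool := (val b.2.2 <= 1)%N.

Definition tags (n : nat) : seq 'I_4 :=
  match n with 0 => [::] | 1 => [:: t0] | m.+2 => t1 :: nseq m t2 ++ [:: t3] end.

Lemma size_tags n : size (tags n) = n.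
Proof. by case: n => [|[|m]] //=; rewrite size_cat size_nseq addn1. Qed.

Lemma hblk b : (0 < size (blk b) <= 3)%N.
Proof. by case: b => s [g [[|[|[|[|k]]]] hk]]. Qed.

Lemma tail_ok m (x : seq Sigma) (g : seq Gamma) :
  size x = m.+1 -> size g = m.+1 ->
  all (fun b => ~~ isfirst b) (zip x (zip g (nseq m t2 ++ [:: t3]))) /\
  flatten (map blk (zip x (zip g (nseq m t2 ++ [:: t3])))) =
    map (@Sym _) (zip x g) ++ [:: Dollar].
Proof.
elim: m x g => [|m IH] [|s x] [|c g] //= [hx] [hg].
  by case: x hx => // _; case: g hg.
have [h1 h2] := IH x g hx hg.
by split => //; rewrite h2.
Qed.

Lemma head_ok (s : Sigma) (x : seq Sigma) (c : Gamma) (g : seq Gamma) :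
  size x = size g ->
  exists b w, [/\ zip (s :: x) (zip (c :: g) (tags (size x).+1)) = b :: w,
    isfirst b, all (fun b => ~~ isfirst b) w &
    flatten (map blk (b :: w)) = with_endmarkers (zip (s :: x) (c :: g))].
Proof.
move=> e; case: x e => [|s' x] e.
  case: g e => // _; exists (s, (c, t0)), [::]; split => //.
case: g e => // c' g [e].
have hg : size (c' :: g) = (size x).+1 by rewrite /= e.
have [h1 h2] := @tail_ok (size x) (s' :: x) (c' :: g) erefl hg.
exists (s, (c, t1)), (zip (s' :: x) (zip (c' :: g) (nseq (size x) t2 ++ [:: t3]))).
split => //.
by rewrite /with_endmarkers /= h2.
Qed.

End Main.

Unset Implicit Arguments.

Theorem lemma3p2 (R : realType) (Sigma : finType) (L : seq Sigma -> bool) :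
  in_1QFAn R L ->
  exists (Gamma : finType) (M : qfa R (Sigma * Gamma)) (eps : R)
         (h : nat -> seq Gamma),
    [/\ 0 <= eps < 1 / 2,
        forall n, size (h n) = n &
        forall x : seq Sigma,
          prob_out M (track x (h (size x))) (L x) >= 1 - eps].
Proof.
move=> [Gamma [M [eps [h [heps hh hM]]]]].
exists (Gamma * 'I_4)%type, (Mq M (@blk Sigma Gamma) (@isfirst Sigma Gamma) (L [::])), eps,
  (fun n => zip (h n) (tags n)).
split => //.
- by move=> n; rewrite size_zip hh size_tags minnn.
case=> [|s x].
  rewrite /track; have -> : forall t : seq (Gamma * 'I_4), zip ([::] : seq Sigma) t = [::] by case.
  rewrite empty_ok.
  by case/andP: heps => he _; rewrite lerBlDr lerDl.
have := hM (s :: x); have := hh (size x).+1.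
rewrite /track /=.
case E: (h (size x).+1) => [|c g] //= [hg].
have [b [w [ez f nf efl]]] := head_ok s c (esym hg).
by rewrite ez /prob_out init_Mq (runB _ (@hblk Sigma Gamma)) // efl.
Qed.
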